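(* The following single-statistic generating functions hold over $S_n(123,132)$: $$\sum_{n\ge0}\sum_{\pi\in S_n(123,132)}x^nu^{\operatorname{lrmax}(\pi)}=\frac{1-2x+ux-ux^2+u^2x^2}{1-2x},\qquad \sum_{n\ge0}\sum_{\pi\in S_n(123,132)}x^nv^{\operatorname{rlmax}(\pi)}=\frac{1-x}{1-x-vx},$$ $$\sum_{n\ge0}\sum_{\pi\in S_n(123,132)}x^ns^{\operatorname{lrmin}(\pi)}=\frac{1-sx}{1-2sx-sx^2+s^2x^2},\qquad \sum_{n\ge0}\sum_{\pi\in S_n(123,132)}x^nt^{\operatorname{rlmin}(\pi)}=\frac{1-2x+tx-tx^2+t^2x^2}{1-2x}.$$
   Context: For $n\ge 0$, $S_n$ denotes the set of permutations $\pi=\pi_1\cdots\pi_n$ of $[n]=\{1,\dots,n\}$ ($S_0$ consists of the empty permutation, for which all statistics are $0$). $S_n(123,132)$ is the set of $\pi\in S_n$ containing no subsequence order-isomorphic to $123$ or to $132$. $\pi_i$ is a left-to-right maximum (resp. minimum) if it is larger (resp. smaller) than every $\pi_j$ with $j<i$, and a right-to-left maximum (resp. minimum) if it is larger (resp. smaller) than every $\pi_j$ with $j>i$; $\operatorname{lrmax},\operatorname{lrmin},\operatorname{rlmax},\operatorname{rlmin}$ count these. *)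

(* Defs.v *)
From mathcomp Require Import all_boot all_order all_algebra all_fingroup.
Set Implicit Arguments. Unset Strict Implicit. Unset Printing Implicit Defensive.
Import GRing.Theory.
Local Open Scope ring_scope.

(* pi in 'S_n, pi_i = pi i (values 0..n-1, order-isomorphic to 1..n) *)
Definition av123_132 n (p : 'S_n) : bool :=
  [forall i : 'I_n, forall j : 'I_n, forall k : 'I_n,
     ((i < j)%N && (j < k)%N) ==>
     ~~ ( ((p i < p j)%N && (p j < p k)%N)
       || ((p i < p k)%N && (p k < p j)%N) )].

Definition lrmax n (p : 'S_n) : nat :=
  #|[set i : 'I_n | [forall j : 'I_n, (j < i)%N ==> (p j < p i)%N]]|.
Definition rlmax n (p : 'S_n) : nat :=
  #|[set i : 'I_n | [forall j : 'I_n, (i < j)%N ==> (p j < p i)%N]]|.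
Definition lrmin n (p : 'S_n) : nat :=
  #|[set i : 'I_n | [forall j : 'I_n, (j < i)%N ==> (p i < p j)%N]]|.
Definition rlmin n (p : 'S_n) : nat :=
  #|[set i : 'I_n | [forall j : 'I_n, (i < j)%N ==> (p i < p j)%N]]|.

(* coefficient of x^n: sum over S_n(123,132) of u^{stat pi}, in Z[u] *)
Definition gfcoef (stat : forall n, 'S_n -> nat) (n : nat) : {poly int} :=
  \sum_(p : 'S_n | av123_132 p) 'X^(stat n p).

(* The formal power series sum_n F n x^n (coefficients in R) equals the
   rational function N/D (N, D polynomials in x, D`_0 = 1 invertible):
   i.e. F * D = N as formal power series. *)
Definition fps_eq_ratio (R : nzRingType) (F : nat -> R) (N D : {poly R}) : Prop :=
  forall n : nat, \sum_(k < n.+1) F k * D`_(n - k) = N`_n.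

(* the statistic variable u (resp. v, s, t) as a constant in {poly {poly int}} *)
Definition uvar : {poly {poly int}} := ('X : {poly int})%:P.

(* Main.v *)
Require Import Defs.
From mathcomp Require Import all_boot all_order all_algebra all_fingroup.
From mathcomp Require Import zify ring.
Set Implicit Arguments. Unset Strict Implicit. Unset Printing Implicit Defensive.
Import GRing.Theory.

Lemma lift_val n (a : 'I_n.+1) (x : 'I_n) : (lift a x : nat) = (a <= x) + x.
Proof. by []. Qed.

Lemma ltn_lift2 n (a : 'I_n.+1) (x y : 'I_n) : (lift a x < lift a y) = (x < y).
Proof. rewrite !lift_val; case: (leqP a x); case: (leqP a y); lia. Qed.

Lemma ltn_liftl n (a : 'I_n.+1) (x : 'I_n) : (a < lift a x) = (a <= x).
Proof. rewrite !lift_val; case: (leqP a x); lia. Qed.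

Lemma ltn_liftr n (a : 'I_n.+1) (x : 'I_n) : (lift a x < a) = (x < a).
Proof. rewrite !lift_val; case: (leqP a x); lia. Qed.

Lemma forall_S n (P : pred 'I_n.+1) :
  [forall i, P i] = P ord0 && [forall k : 'I_n, P (lift ord0 k)].
Proof.
apply/forallP/andP => [H|[H0 /forallP H] i]; first by split=> //; apply/forallP.
by case: (unliftP ord0 i) => [k|] ->.
Qed.

Lemma card_sum (T : finType) (P : pred T) : #|[set x | P x]| = \sum_(x : T) (P x : nat).
Proof. rewrite -sum1_card big_mkcond; apply: eq_bigr => x _; rewrite inE; by case: (P x). Qed.

Lemma card_S n (P : pred 'I_n.+1) :
  #|[set i | P i]| = P ord0 + #|[set k : 'I_n | P (lift ord0 k)]|.
Proof. by rewrite !card_sum big_ord_recl. Qed.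

Lemma sum_S n (F : 'S_n.+1 -> {poly int}) :
  (\sum_p F p = \sum_(a : 'I_n.+1) \sum_(q : 'S_n) F (lift_perm ord0 a q))%R.
Proof.
rewrite (partition_big (fun s : 'S_n.+1 => s ord0) predT) //=.
apply: eq_bigr => j0 _.
rewrite (reindex (lift_perm ord0 j0)); last first.
  pose ulsf i (s : 'S_n.+1) k := odflt k (unlift (s i) (s (lift i k))).
  have ulsfK i (s : 'S_n.+1) k: lift (s i) (ulsf i s k) = s (lift i k).
    rewrite /ulsf; have:= neq_lift i k.
    by rewrite -(can_eq (permK s)) => /unlift_some[] ? ? ->.
  have inj_ulsf: injective (ulsf ord0 _).
    move=> s; apply: can_inj (ulsf (s ord0) s^-1%g) _ => k'.
    by rewrite {1}/ulsf ulsfK !permK liftK.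
  exists (fun s => perm (inj_ulsf s)) => [s _ | s].
    by apply/permP=> k'; rewrite permE /ulsf lift_perm_lift lift_perm_id liftK.
  move/(s _ =P _) => si0; apply/permP=> k.
  case: (unliftP ord0 k) => [k'|] ->; rewrite ?lift_perm_id //.
  by rewrite lift_perm_lift -si0 permE ulsfK.
by apply: eq_bigl => s; rewrite lift_perm_id eqxx.
Qed.


Definition avb n (p : 'S_n) : bool :=
  [forall i : 'I_n, forall j : 'I_n, forall k : 'I_n,
     ((i < j) && (j < k)) ==> ~~ ((p i < p j) && (p i < p k))].

Lemma avE n (p : 'S_n) : av123_132 p = avb p.
Proof.
apply: eq_forallb => i; apply: eq_forallb => j; apply: eq_forallb => k.
case: (boolP ((i < j) && (j < k))) => //= /andP[ij jk].
have: (p j : nat) != p k.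
  apply/negP => /eqP /val_inj /perm_inj E; move: jk; rewrite E; lia.
move: (p i : nat) (p j : nat) (p k : nat) => x y z.
case: (ltngtP y z) => //= yz _; case: (ltnP x y); case: (ltnP x z) => //= *; lia.
Qed.

Lemma forall_perm n (q : 'S_n) (P : pred 'I_n) :
  [forall k, P (q k)] = [forall v, P v].
Proof.
apply/forallP/forallP => H v; last exact: H.
by have := H (q^-1 v)%g; rewrite permKV.
Qed.

Lemma two_top n (q : 'S_n) (a : nat) :
  [forall j : 'I_n, forall k : 'I_n, (j < k) ==> ~~ ((a <= q j) && (a <= q k))] = (n.-1 <= a).
Proof.
apply/idP/idP => [H|Ha]; last first.
  apply/forallP => j; apply/forallP => k; apply/implyP => jk.
  apply/negP => /andP[hj hk].
  have E : (q j : nat) = q k by move: (ltn_ord (q j)) (ltn_ord (q k)); lia.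
  by move: jk; rewrite (perm_inj (val_inj E)) ltnn.
rewrite leqNgt; apply/negP => ha.
have n2 : 1 < n by lia.
have h1 : n.-1 < n by lia.
pose v1 := Ordinal h1.
have h2 : n.-2 < n by lia.
pose v2 := Ordinal h2.
pose j1 := (q^-1 v1)%g; pose j2 := (q^-1 v2)%g.
have q1 : q j1 = v1 by rewrite permKV.
have q2 : q j2 = v2 by rewrite permKV.
case: (ltngtP j1 j2) => c.
- move/forallP: H => /(_ j1) /forallP /(_ j2) /implyP /(_ c).
  by rewrite q1 q2 /=; case: (n) ha => [|[|m]] //=; lia.
- move/forallP: H => /(_ j2) /forallP /(_ j1) /implyP /(_ c).
  by rewrite q1 q2 /=; case: (n) ha => [|[|m]] //=; lia.
- have: v1 = v2 by rewrite -q1 -q2 (val_inj c).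
  move/(congr1 val) => /=; lia.
Qed.

Lemma av_lift n (q : 'S_n) (a : 'I_n.+1) :
  avb (lift_perm ord0 a q) = avb q && (n.-1 <= a).
Proof.
rewrite -(two_top q); set p := lift_perm ord0 a q.
have p0 : p ord0 = a by rewrite lift_perm_id.
have pl k : p (lift ord0 k) = lift a (q k) by rewrite lift_perm_lift.
apply/idP/andP => [/forallP H | [/forallP Hq /forallP Ht]].
  split.
    apply/forallP => i; apply/forallP => j; apply/forallP => k.
    move: (H (lift ord0 i)) => /forallP /(_ (lift ord0 j)) /forallP /(_ (lift ord0 k)).
    by rewrite !pl !ltn_lift2.
  apply/forallP => j; apply/forallP => k.
  move: (H ord0) => /forallP /(_ (lift ord0 j)) /forallP /(_ (lift ord0 k)).
  by rewrite !pl p0 !ltn_liftl ltn_lift2.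
apply/forallP => i; apply/forallP => j; apply/forallP => k.
apply/implyP => /andP[ij jk].
case: (unliftP ord0 j) ij jk => [j'|] -> ij jk; last by rewrite ltn0 in ij.
case: (unliftP ord0 k) jk => [k'|] -> jk; last by rewrite ltn0 in jk.
rewrite !pl; move: jk; rewrite !lift0 ltnS => jk.
case: (unliftP ord0 i) ij => [i'|] -> ij.
  move: ij; rewrite !lift0 ltnS => ij; rewrite pl !ltn_lift2.
  by move: (Hq i') => /forallP /(_ j') /forallP /(_ k') /implyP; apply; rewrite ij jk.
rewrite p0 !ltn_liftl.
by move: (Ht j') => /forallP /(_ k') /implyP; apply.
Qed.


Section Stats.
Variables (n : nat) (q : 'S_n) (a : 'I_n.+1).
Let p := lift_perm ord0 a q.
Let p0 : p ord0 = a. Proof. by rewrite /p lift_perm_id. Qed.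
Let pl k : p (lift ord0 k) = lift a (q k). Proof. by rewrite /p lift_perm_lift. Qed.

Lemma lrmax_lift : lrmax p =
  1 + #|[set k : 'I_n | (a <= q k) && [forall j : 'I_n, (j < k) ==> (q j < q k)]]|.
Proof.
rewrite /lrmax card_S; congr (_ + _).
  by rewrite (_ : [forall j, _] = true) //; apply/forallP => j; rewrite ltn0.
apply: eq_card => k; rewrite !inE forall_S !pl p0 ltn_liftl.
rewrite leq0n ltn_liftl; congr (_ && _).
by apply: eq_forallb => j; rewrite pl !ltn_lift2.
Qed.

End Stats.

Lemma lt0lift m (k : 'I_m) : (@ord0 m < lift ord0 k) = true.
Proof. by rewrite lift0. Qed.

Lemma all_lt m c : [forall v : 'I_m, v < c] = (m <= c).
Proof.
apply/forallP/idP => [H|H v]; last exact: leq_trans (ltn_ord v) H.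
rewrite leqNgt; apply/negP => h; by have := H (Ordinal h); rewrite ltnn.
Qed.

Lemma all_ge m c : [forall v : 'I_m, c <= v] = (c == 0) || (m == 0).
Proof.
case: m => [|m]; first by rewrite orbT; apply/forallP => [[]].
rewrite orbF; apply/forallP/eqP => [H|-> v //]; by move/(_ ord0): H; rewrite leqn0 => /eqP.
Qed.

Definition lrminA m (q : 'S_m) (c : nat) :=
  #|[set k : 'I_m | (q k < c) && [forall j : 'I_m, (j < k) ==> (q k < q j)]]|.

Lemma lrmin_A m (q : 'S_m) : lrmin q = lrminA q m.
Proof. by apply: eq_card => k; rewrite !inE ltn_ord. Qed.

Section Stats2.
Variables (n : nat) (q : 'S_n) (a : 'I_n.+1).
Let p := lift_perm ord0 a q.
Let p0 : p ord0 = a. Proof. by rewrite /p lift_perm_id. Qed.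
Let pl k : p (lift ord0 k) = lift a (q k). Proof. by rewrite /p lift_perm_lift. Qed.

Lemma rlmax_lift : rlmax p = (n <= a) + rlmax q.
Proof.
rewrite /rlmax card_S; congr (_ + _).
  rewrite forall_S p0 ltnn /= -(all_lt n a) -(forall_perm q (fun v => v < a)).
  congr (nat_of_bool _); apply: eq_forallb => k; by rewrite pl ltn_liftr.
apply: eq_card => k; rewrite !inE forall_S pl p0 /=.
by apply: eq_forallb => j; rewrite pl !ltn_lift2.
Qed.

Lemma rlmin_lift : rlmin p = ((val a == 0) || (n == 0)) + rlmin q.
Proof.
rewrite /rlmin card_S; congr (_ + _).
  rewrite forall_S p0 ltnn /= -(all_ge n a) -(forall_perm q (fun v => a <= v)).
  congr (nat_of_bool _); apply: eq_forallb => k; by rewrite pl ltn_liftl.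
apply: eq_card => k; rewrite !inE forall_S pl p0 /=.
by apply: eq_forallb => j; rewrite pl !ltn_lift2.
Qed.

Lemma lrmin_lift : lrmin p = 1 + lrminA q a.
Proof.
rewrite /lrmin card_S; congr (_ + _).
  by rewrite (_ : [forall j, _] = true) //; apply/forallP => j; rewrite ltn0.
apply: eq_card => k; rewrite !inE forall_S !pl p0 lt0lift ltn_liftr; congr (_ && _).
by apply: eq_forallb => j; rewrite pl !ltn_lift2.
Qed.

Lemma lrminA_lift c : lrminA p c =
  (a < c) + #|[set k : 'I_n | (q k < c) && (q k < a) &&
                 [forall j : 'I_n, (j < k) ==> (q k < q j)]]|.
Proof.
rewrite /lrminA card_S; congr (_ + _).
  by rewrite p0 (_ : [forall j, _] = true) ?andbT //; apply/forallP => j; rewrite ltn0.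
apply: eq_card => k; rewrite !inE forall_S !pl p0 lt0lift ltn_liftr.
case: (ltnP (q k) a) => h; last by rewrite !andbF.
rewrite (_ : (lift a (q k) : nat) = q k); last by rewrite lift_val leqNgt h.
rewrite implybT andTb andbT.
congr (_ && _); apply: eq_forallb => j; rewrite pl; congr (_ ==> _); rewrite /= /bump; case: (leqP a (q j)) => hj; rewrite ?add1n ?add0n; lia.
Qed.

End Stats2.


Local Open Scope ring_scope.

Lemma gf_step n (f : 'S_n.+1 -> nat) :
  \sum_(p : 'S_n.+1 | av123_132 p) 'X^(f p) =
  \sum_(a : 'I_n.+1 | (n.-1 <= a)%N) \sum_(q : 'S_n | av123_132 q)
      ('X^(f (lift_perm ord0 a q)) : {poly int}).
Proof.
rewrite big_mkcond sum_S [RHS]big_mkcond; apply: eq_bigr => a _.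
under eq_bigr => q _ do rewrite avE av_lift -avE.
case: (n.-1 <= a)%N; last by rewrite big1 // => q _; rewrite andbF.
by rewrite [RHS]big_mkcond; apply: eq_bigr => q _; rewrite andbT.
Qed.

Lemma sum2 m (F : 'I_m.+2 -> {poly int}) :
  \sum_(a : 'I_m.+2 | (m <= a)%N) F a = F ord_max + F (widen_ord (leqnSn _) ord_max).
Proof.
rewrite big_mkcond !big_ord_recr /= leqnn leqnSn big1 ?add0r 1?addrC // => i _.
by rewrite leqNgt ltn_ord.
Qed.

Lemma sum1 (F : 'I_1 -> {poly int}) :
  \sum_(a : 'I_1 | (0.-1 <= a)%N) F a = F ord_max.
Proof. by rewrite big_mkcond big_ord_recr big_ord0 /= add0r. Qed.

Lemma cardI0 (A : {set 'I_0}) : #|A| = 0%N.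
Proof. by apply/eqP; rewrite -leqn0; apply: leq_trans (max_card _) _; rewrite card_ord. Qed.

Lemma gf0 (stat : forall n, 'S_n -> nat) :
  (forall p : 'S_0, stat 0%N p = 0%N) -> gfcoef stat 0 = 1.
Proof.
move=> H; rewrite /gfcoef (big_pred1 (1%g : 'S_0)) ?H ?expr0 // => p.
rewrite /pred1 /=. have -> : p == 1%g by apply/eqP/permP => [[]].
by apply/forallP => [[]].
Qed.

Definition cnt n := gfcoef (fun _ _ => 0%N) n.

Lemma cnt_rec n : cnt n.+1 = \sum_(a : 'I_n.+1 | (n.-1 <= a)%N) cnt n.
Proof. by rewrite /cnt /gfcoef gf_step. Qed.

Lemma cnt0 : cnt 0 = 1. Proof. exact: gf0. Qed.
Lemma cnt1 : cnt 1 = 1. Proof. by rewrite cnt_rec sum1 cnt0. Qed.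
Lemma cntS m : cnt m.+2 = cnt m.+1 + cnt m.+1. Proof. by rewrite cnt_rec sum2. Qed.

Lemma lrmax_card n (q : 'S_n) (a : 'I_n.+1) : (n.-1 <= a)%N ->
  #|[set k : 'I_n | (a <= q k)%N && [forall j : 'I_n, (j < k)%N ==> (q j < q k)%N]]| = (a < n)%N.
Proof.
move=> hn; case: (ltnP a n) => h; last first.
  apply/eqP; rewrite cards_eq0; apply/eqP/setP => k; rewrite !inE.
  by rewrite leqNgt (leq_trans (ltn_ord (q k)) h).
pose v := Ordinal h.
rewrite (_ : [set k | _] = [set (q^-1 v)%g]) ?cards1 //.
apply/setP => k; rewrite !inE; apply/andP/eqP => [[hk _]|->].
  rewrite -(permK q k); congr (_ _); apply: val_inj => /=.
  move: (ltn_ord (q k)); lia.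
rewrite permKV /= leqnn; split=> //; apply/forallP => j; apply/implyP => jk.
have ne : (q j : nat) != a.
  apply/eqP => E; have Ej : j = (q^-1 v)%g.
    by rewrite -(permK q j); congr (_ _); apply: val_inj.
  by rewrite Ej ltnn in jk.
move: (ltn_ord (q j)) ne; lia.
Qed.

Lemma lrmax_rec n : gfcoef lrmax n.+1 =
  \sum_(a : 'I_n.+1 | (n.-1 <= a)%N) 'X^(1 + (a < n)%N) * cnt n.
Proof.
rewrite /cnt /gfcoef gf_step; apply: eq_bigr => a ha; rewrite mulr_sumr.
by apply: eq_bigr => q _; rewrite lrmax_lift lrmax_card // expr0 mulr1.
Qed.

Lemma rlmax_rec n : gfcoef rlmax n.+1 =
  \sum_(a : 'I_n.+1 | (n.-1 <= a)%N) 'X^(n <= a)%N * gfcoef rlmax n.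
Proof.
rewrite /gfcoef gf_step; apply: eq_bigr => a ha; rewrite mulr_sumr.
by apply: eq_bigr => q _; rewrite rlmax_lift exprD.
Qed.

Lemma rlmin_rec n : gfcoef rlmin n.+1 =
  \sum_(a : 'I_n.+1 | (n.-1 <= a)%N) 'X^((val a == 0%N) || (n == 0%N)) * gfcoef rlmin n.
Proof.
rewrite /gfcoef gf_step; apply: eq_bigr => a ha; rewrite mulr_sumr.
by apply: eq_bigr => q _; rewrite rlmin_lift exprD.
Qed.

Definition Sm n := \sum_(q : 'S_n | av123_132 q) ('X^(lrminA q n.-1) : {poly int}).

Lemma lrmin_rec n : gfcoef lrmin n.+1 =
  \sum_(a : 'I_n.+1 | (n.-1 <= a)%N) \sum_(q : 'S_n | av123_132 q) 'X^(1 + lrminA q a).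
Proof.
rewrite /gfcoef gf_step; apply: eq_bigr => a ha.
by apply: eq_bigr => q _; rewrite lrmin_lift.
Qed.

Lemma Sm_rec n : Sm n.+1 =
  \sum_(a : 'I_n.+1 | (n.-1 <= a)%N) \sum_(q : 'S_n | av123_132 q)
     'X^((a < n)%N + #|[set k : 'I_n | (q k < n)%N && (q k < a)%N &&
                 [forall j : 'I_n, (j < k)%N ==> (q k < q j)%N]]|).
Proof.
rewrite /Sm gf_step; apply: eq_bigr => a ha.
by apply: eq_bigr => q _; rewrite lrminA_lift.
Qed.


Lemma sumS0 (F : 'S_0 -> {poly int}) : \sum_(q : 'S_0 | av123_132 q) F q = F 1%g.
Proof.
rewrite (big_pred1 (1%g : 'S_0)) // => p.
rewrite /pred1 /=. have -> : p == 1%g by apply/eqP/permP => [[]].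
by apply/forallP => [[]].
Qed.

Lemma cnt2 m : cnt m.+2 = cnt m.+1 *+ 2. Proof. by rewrite cntS mulr2n. Qed.

Lemma L0 : gfcoef lrmax 0 = 1. Proof. by apply: gf0 => p; rewrite /lrmax cardI0. Qed.
Lemma L1 : gfcoef lrmax 1 = 'X.
Proof. by rewrite lrmax_rec sum1 /= cnt0 mulr1 expr1. Qed.
Lemma L2m m : gfcoef lrmax m.+2 = ('X + 'X ^+ 2) * cnt m.+1.
Proof. by rewrite lrmax_rec sum2 /= ltnn leqnn mulrDl. Qed.
Lemma L2 : gfcoef lrmax 2 = 'X + 'X ^+ 2.
Proof. by rewrite L2m cnt1 mulr1. Qed.
Lemma L3 m : gfcoef lrmax m.+3 = gfcoef lrmax m.+2 *+ 2.
Proof. by rewrite !L2m cnt2 mulrnAr. Qed.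

Lemma R0 : gfcoef rlmin 0 = 1. Proof. by apply: gf0 => p; rewrite /rlmin cardI0. Qed.
Lemma R1 : gfcoef rlmin 1 = 'X.
Proof. by rewrite rlmin_rec sum1 /= R0 mulr1 expr1. Qed.
Lemma R2m m : gfcoef rlmin m.+2 = gfcoef rlmin m.+1 + 'X ^+ (m == 0)%N * gfcoef rlmin m.+1.
Proof. by rewrite rlmin_rec sum2 /= orbF expr0 mul1r. Qed.
Lemma R2 : gfcoef rlmin 2 = 'X + 'X ^+ 2.
Proof. by rewrite R2m R1 /= expr1 expr2. Qed.
Lemma R3 m : gfcoef rlmin m.+3 = gfcoef rlmin m.+2 *+ 2.
Proof. by rewrite R2m /= expr0 mul1r mulr2n. Qed.

Lemma M0 : gfcoef rlmax 0 = 1. Proof. by apply: gf0 => p; rewrite /rlmax cardI0. Qed.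
Lemma M1 : gfcoef rlmax 1 = 'X.
Proof. by rewrite rlmax_rec sum1 /= M0 mulr1 expr1. Qed.
Lemma M2 m : gfcoef rlmax m.+2 = 'X * gfcoef rlmax m.+1 + gfcoef rlmax m.+1.
Proof. by rewrite rlmax_rec sum2 /= leqnn ltnn expr1 expr0 mul1r. Qed.

Lemma N0 : gfcoef lrmin 0 = 1. Proof. by apply: gf0 => p; rewrite /lrmin cardI0. Qed.
Lemma S0 : Sm 0 = 1. Proof. by rewrite /Sm sumS0 /lrminA cardI0 expr0. Qed.
Lemma N1 : gfcoef lrmin 1 = 'X.
Proof. by rewrite lrmin_rec sum1 sumS0 /lrminA cardI0 addn0 expr1. Qed.
Lemma S1 : Sm 1 = 1.
Proof. by rewrite Sm_rec sum1 sumS0 /lrminA cardI0 addn0 expr0. Qed.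
Lemma N2m m : gfcoef lrmin m.+2 = 'X * gfcoef lrmin m.+1 + 'X * Sm m.+1.
Proof.
rewrite lrmin_rec sum2 /= /gfcoef /Sm !mulr_sumr; congr (_ + _);
  apply: eq_bigr => q _; rewrite exprD expr1 //.
by rewrite lrmin_A.
Qed.
Lemma S2m m : Sm m.+2 = gfcoef lrmin m.+1 + 'X * Sm m.+1.
Proof.
rewrite Sm_rec sum2 /= /gfcoef /Sm !mulr_sumr; congr (_ + _);
  apply: eq_bigr => q _.
  rewrite ltnn add0n lrmin_A; congr ('X ^+ _); apply: eq_card => k.
  by rewrite !inE ltn_ord.
rewrite ltnSn add1n exprS; congr ('X * 'X ^+ _); apply: eq_card => k.
rewrite !inE ltn_ord /=; congr (_ && _); move: (ltn_ord (q k)); lia.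
Qed.
Lemma N2 : gfcoef lrmin 2 = 'X + 'X ^+ 2.
Proof. by rewrite N2m N1 S1 mulr1 addrC expr2. Qed.
Lemma N3 m : gfcoef lrmin m.+3 =
  'X *+ 2 * gfcoef lrmin m.+2 + ('X - 'X ^+ 2) * gfcoef lrmin m.+1.
Proof.
have h1 := N2m m.+1; have h2 := S2m m; have h3 := N2m m.
rewrite h1 h2.
have -> : 'X * Sm m.+1 = gfcoef lrmin m.+2 - 'X * gfcoef lrmin m.+1 by rewrite h3; ring.
ring.
Qed.


Lemma fps3 (R : nzRingType) (F : nat -> R) (D : {poly R}) n :
  (forall i, (3 <= i)%N -> D`_i = 0) ->
  \sum_(k < n.+1) F k * D`_(n - k) =
  match n with
  | 0 => F 0%N * D`_0
  | 1 => F 0%N * D`_1 + F 1%N * D`_0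
  | m.+2 => F m * D`_2 + F m.+1 * D`_1 + F m.+2 * D`_0
  end.
Proof.
case: n => [|[|m]] HD.
- by rewrite big_ord_recr big_ord0 /= add0r.
- by rewrite !big_ord_recr big_ord0 /= add0r.
rewrite !big_ord_recr /= big1 ?add0r; last first.
  by move=> i _; rewrite HD ?mulr0 //=; move: (ltn_ord i); lia.
have -> : (m.+2 - m = 2)%N by lia.
have -> : (m.+2 - m.+1 = 1)%N by lia.
by rewrite subnn.
Qed.


Lemma eqS0 k : (k.+1 == 0)%N = false. Proof. by []. Qed.
Lemma eq0S k : (0 == k.+1)%N = false. Proof. by []. Qed.
Lemma natF (R : nzRingType) : ((false : nat)%:R : R) = 0. Proof. by []. Qed.
Lemma natT (R : nzRingType) : ((true : nat)%:R : R) = 1. Proof. by []. Qed.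

Ltac csimp := rewrite -?mulrA ?mulr_natl -?polyC_exp
  !(coefD, coefB, coefN, coefMNn, coefMn, coef1, coefCM, coefX, coefXn) ?eqSS ?eqS0 ?eq0S ?eqxx ?natF ?natT.


Lemma t1 : fps_eq_ratio (gfcoef lrmax)
        (1 - 2%:R * 'X + ('X%:P) * 'X - 'X%:P * 'X ^+ 2 + 'X%:P ^+ 2 * 'X ^+ 2) (1 - 2%:R * 'X).
Proof.
move=> n; rewrite fps3; last first.
  by case=> [|[|[|i]]] // _; csimp; rewrite ?mulr0 ?addr0 ?subr0 ?oppr0 ?add0r ?sub0r.
case: n => [|[|[|m]]]; csimp.
- rewrite L0. ring.
- rewrite L0 L1. ring.
- rewrite L0 L1 L2. ring.
- rewrite L3. ring.
Qed.

Lemma t2 : fps_eq_ratio (gfcoef rlmax) (1 - 'X) (1 - 'X - 'X%:P * 'X).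
Proof.
move=> n; rewrite fps3; last first.
  by case=> [|[|[|i]]] // _; csimp; rewrite ?mulr0 ?addr0 ?subr0 ?oppr0 ?add0r ?sub0r.
case: n => [|[|m]]; csimp.
- rewrite M0. ring.
- rewrite M0 M1. ring.
- rewrite M2. ring.
Qed.

Lemma t3 : fps_eq_ratio (gfcoef lrmin)
        (1 - 'X%:P * 'X) (1 - 2%:R * 'X%:P * 'X - 'X%:P * 'X ^+ 2 + 'X%:P ^+ 2 * 'X ^+ 2).
Proof.
move=> n; rewrite fps3; last first.
  by case=> [|[|[|i]]] // _; csimp; rewrite ?mulr0 ?addr0 ?subr0 ?oppr0 ?add0r ?sub0r.
case: n => [|[|[|m]]]; csimp.
- rewrite N0. ring.
- rewrite N0 N1. ring.
- rewrite N0 N1 N2. ring.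
- rewrite N3. ring.
Qed.

Lemma t4 : fps_eq_ratio (gfcoef rlmin)
        (1 - 2%:R * 'X + ('X%:P) * 'X - 'X%:P * 'X ^+ 2 + 'X%:P ^+ 2 * 'X ^+ 2) (1 - 2%:R * 'X).
Proof.
move=> n; rewrite fps3; last first.
  by case=> [|[|[|i]]] // _; csimp; rewrite ?mulr0 ?addr0 ?subr0 ?oppr0 ?add0r ?sub0r.
case: n => [|[|[|m]]]; csimp.
- rewrite R0. ring.
- rewrite R0 R1. ring.
- rewrite R0 R1 R2. ring.
- rewrite R3. ring.
Qed.

Theorem corollary2 :
  let x : {poly {poly int}} := 'X in
  let u := uvar in
  [/\ fps_eq_ratio (gfcoef lrmax)
        (1 - 2%:R * x + u * x - u * x ^+ 2 + u ^+ 2 * x ^+ 2) (1 - 2%:R * x),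
      fps_eq_ratio (gfcoef rlmax) (1 - x) (1 - x - u * x),
      fps_eq_ratio (gfcoef lrmin)
        (1 - u * x) (1 - 2%:R * u * x - u * x ^+ 2 + u ^+ 2 * x ^+ 2)
    & fps_eq_ratio (gfcoef rlmin)
        (1 - 2%:R * x + u * x - u * x ^+ 2 + u ^+ 2 * x ^+ 2) (1 - 2%:R * x)].
Proof. split; [exact: t1 | exact: t2 | exact: t3 | exact: t4]. Qed.
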